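(* The matrices $A=\begin{pmatrix}1&2&1\\1&1&0\\1&0&1\end{pmatrix}$ and $B=\begin{pmatrix}1&0&1&0&1\\0&1&1&1&0\\1&1&1&0&0\\1&0&0&0&1\\0&1&0&1&0\end{pmatrix}$ are balanced strong shift equivalent (in particular strong shift equivalent and unitally shift equivalent).
   Context: A rectangular $\{0,1\}$-matrix $D$ is a division matrix if every row contains at least one $1$ and every column contains exactly one $1$. For square $\mathbb{N}$-matrices $A,B$ with no zero rows, $B$ is an outsplit of $A$ if there are a division matrix $D$ and an $\mathbb{N}$-matrix $E$ with $A=DE$ and $B=ED$. $A$ and $B$ are balanced elementary strong shift equivalent if there are a division matrix $D$ and rectangular $\mathbb{N}$-matrices $R_A,R_B$ with $A=D^tR_A$, $B=D^tR_B$ and $R_AD^t=R_BD^t$. Balanced strong shift equivalence is the equivalence relation generated by balanced elementary strong shift equivalence and outsplits. Two square $\mathbb{N}$-matrices are unitally shift equivalent if there are $\ell\ge1$ and rectangular $\mathbb{N}$-matrices $R,S$ with $A^\ell=RS$, $B^\ell=SR$, $AR=RB$, $BS=SA$, and $m,k\in\mathbb{N}$ with $(B^t)^mR^t\underline1=(B^t)^{m+k}\underline1$ ($\underline1$ the all-ones column vector). *)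

(* Defs.v *)
From mathcomp Require Import all_boot all_algebra.
From Stdlib Require Import Relations.
Set Implicit Arguments. Unset Strict Implicit. Unset Printing Implicit Defensive.
Import GRing.Theory.
Local Open Scope ring_scope.

Definition sqmx := {n : nat & 'M[nat]_n}.

Definition no_zero_row (n : nat) (A : 'M[nat]_n) : Prop :=
  forall i : 'I_n, exists j : 'I_n, A i j != 0%N.

Definition division_mx (m n : nat) (D : 'M[nat]_(m, n)) : Prop :=
  (forall i j, D i j = 0%N \/ D i j = 1%N) /\
  (forall i : 'I_m, exists j : 'I_n, D i j = 1%N) /\
  (forall j : 'I_n, exists i : 'I_m, D i j = 1%N /\
      forall i' : 'I_m, D i' j = 1%N -> i' = i).

Definition outsplit (X Y : sqmx) : Prop :=
  let (n, A) := X in let (m, B) := Y in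
  no_zero_row A /\ no_zero_row B /\
  exists (D : 'M[nat]_(n, m)) (E : 'M[nat]_(m, n)),
    division_mx D /\ A = D *m E /\ B = E *m D.

Definition balanced_elem_sse (X Y : sqmx) : Prop :=
  let (n, A) := X in let (m, B) := Y in
  no_zero_row A /\ no_zero_row B /\
  exists (e : m = n) (k : nat) (D : 'M[nat]_(k, n)) (RA RB : 'M[nat]_(k, n)),
    division_mx D /\ A = D^T *m RA /\ castmx (e, e) B = D^T *m RB /\
    RA *m D^T = RB *m D^T.

Definition bsse : relation sqmx :=
  clos_refl_sym_trans sqmx (fun X Y => balanced_elem_sse X Y \/ outsplit X Y).

Definition elem_sse (X Y : sqmx) : Prop :=
  let (n, A) := X in let (m, B) := Y in
  exists (R : 'M[nat]_(n, m)) (S : 'M[nat]_(m, n)), A = R *m S /\ B = S *m R.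

Definition sse : relation sqmx := clos_refl_sym_trans sqmx elem_sse.

Definition unital_se (X Y : sqmx) : Prop :=
  let (n, A) := X in let (m, B) := Y in
  exists (l : nat) (R : 'M[nat]_(n, m)) (S : 'M[nat]_(m, n)),
    (1 <= l)%N /\ A ^+ l = R *m S /\ B ^+ l = S *m R /\
    A *m R = R *m B /\ B *m S = S *m A /\
    exists p k : nat,
      (B^T) ^+ p *m R^T *m (const_mx 1 : 'cV[nat]_n)
      = (B^T) ^+ (p + k) *m (const_mx 1 : 'cV[nat]_m).

Definition matA : 'M[nat]_3 :=
  \matrix_(i < 3, j < 3)
    nth 0%N (nth [::] [:: [:: 1; 2; 1]; [:: 1; 1; 0]; [:: 1; 0; 1]]%N i) j.

Definition matB : 'M[nat]_5 :=
  \matrix_(i < 5, j < 5)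
    nth 0%N (nth [::]
      [:: [:: 1; 0; 1; 0; 1]; [:: 0; 1; 1; 1; 0]; [:: 1; 1; 1; 0; 0];
          [:: 1; 0; 0; 0; 1]; [:: 0; 1; 0; 1; 0]]%N i) j.

(* Main.v *)
Require Import Defs.
From mathcomp Require Import all_boot all_algebra.
From Stdlib Require Import Relations.
Set Implicit Arguments. Unset Strict Implicit. Unset Printing Implicit Defensive.
Import GRing.Theory.
Definition ent (s : seq (seq nat)) (i j : nat) : nat := nth 0%N (nth [::] s i) j.
Definition mxs m n (s : seq (seq nat)) : 'M[nat]_(m,n) :=
  \matrix_(i < m, j < n) nth 0%N (nth [::] s i) j.
Definition mulchk m n p sA sB sC :=
  all (fun i => all (fun j =>
     sumn [seq (ent sA i k * ent sB k j)%N | k <- iota 0 n] == ent sC i j)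
   (iota 0 p)) (iota 0 m).
Lemma sum_sumn (s : seq nat) (F : nat -> nat) :
  (\sum_(k <- s) F k)%R = sumn [seq F k | k <- s].
Proof. by elim: s => [|x s IH]; rewrite ?big_nil ?big_cons //= IH. Qed.
Lemma mulP m n p sA sB sC : mulchk m n p sA sB sC ->
  (mxs m n sA *m mxs n p sB = mxs m p sC)%R.
Proof.
move=> H; apply/matrixP=> i j; rewrite !mxE.
under eq_bigr do rewrite !mxE.
rewrite -(big_mkord xpredT (fun k => (ent sA i k * ent sB k j)%R)).
rewrite /index_iota subn0 sum_sumn.
move/allP: H => /(_ i); rewrite mem_iota /= => /(_ (ltn_ord i)).
by move/allP => /(_ j); rewrite mem_iota /= => /(_ (ltn_ord j)) /eqP.
Qed.
Definition trchk m n s t :=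
  all (fun i => all (fun j => ent t j i == ent s i j) (iota 0 n)) (iota 0 m).
Lemma trP m n s t : trchk m n s t -> trmx (mxs m n s) = mxs n m t.
Proof.
move=> H; apply/matrixP=> i j; rewrite !mxE.
move/allP: H => /(_ j); rewrite mem_iota /= => /(_ (ltn_ord j)).
by move/allP => /(_ i); rewrite mem_iota /= => /(_ (ltn_ord i)) /eqP.
Qed.
Lemma constP m n (c : nat) : (const_mx c : 'M[nat]_(m,n)) = mxs m n (nseq m (nseq n c)).
Proof. by apply/matrixP=> i j; rewrite !mxE nth_nseq ltn_ord nth_nseq ltn_ord. Qed.
Definition nzchk n s :=
  all (fun i => has (fun j => ent s i j != 0%N) (iota 0 n)) (iota 0 n).
Lemma nzP n s : nzchk n s -> no_zero_row (mxs n n s).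
Proof.
move=> H i; move/allP: H => /(_ i); rewrite mem_iota /= => /(_ (ltn_ord i)).
case/hasP=> j; rewrite mem_iota /= => Hj Hn.
by exists (Ordinal Hj); rewrite mxE.
Qed.
Definition divchk m n s (p : seq nat) :=
  all (fun j => nth 0%N p j < m) (iota 0 n) &&
  all (fun i => all (fun j => ent s i j == (i == nth 0%N p j)) (iota 0 n)) (iota 0 m) &&
  all (fun i => has (fun j => nth 0%N p j == i) (iota 0 n)) (iota 0 m).
Lemma divP m n s p : divchk m n s p -> division_mx (mxs m n s).
Proof.
case/andP=> /andP[H1 H2] H3.
have E (i : 'I_m) (j : 'I_n) : mxs m n s i j = ((i : nat) == nth 0%N p j) :> nat.
  rewrite mxE; move/allP: H2 => /(_ i); rewrite mem_iota /= => /(_ (ltn_ord i)).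
  by move/allP => /(_ j); rewrite mem_iota /= => /(_ (ltn_ord j)) /eqP.
split; [|split].
- by move=> i j; rewrite E; case: eqP; [right|left].
- move=> i; move/allP: H3 => /(_ i); rewrite mem_iota /= => /(_ (ltn_ord i)).
  case/hasP=> j; rewrite mem_iota /= => Hj /eqP Hp.
  by exists (Ordinal Hj); rewrite E /= Hp eqxx.
- move=> j; move/allP: H1 => /(_ j); rewrite mem_iota /= => /(_ (ltn_ord j)) Hm.
  exists (Ordinal Hm); rewrite E /= eqxx; split => // i'.
  by rewrite E; case: eqP => // Hi _; apply: val_inj.
Qed.
Definition LA : seq (seq nat) := [:: [:: 1; 2; 1]; [:: 1; 1; 0]; [:: 1; 0; 1]]%N.
Definition LD1 : seq (seq nat) := [:: [:: 1; 1; 0; 0]; [:: 0; 0; 1; 0]; [:: 0; 0; 0; 1]]%N.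
Definition LE1 : seq (seq nat) := [:: [:: 0; 1; 0]; [:: 1; 1; 1]; [:: 1; 1; 0]; [:: 1; 0; 1]]%N.
Definition LD2 : seq (seq nat) := [:: [:: 1; 0; 0; 0; 0; 0]; [:: 0; 1; 1; 0; 0; 0]; [:: 0; 0; 0; 1; 0; 0]; [:: 0; 0; 0; 0; 1; 1]]%N.
Definition LE2 : seq (seq nat) := [:: [:: 0; 0; 1; 0]; [:: 0; 1; 1; 0]; [:: 1; 0; 0; 1]; [:: 1; 1; 1; 0]; [:: 0; 1; 0; 0]; [:: 1; 0; 0; 1]]%N.
Definition LDb : seq (seq nat) := [:: [:: 1; 0; 0; 0; 0; 0]; [:: 0; 1; 0; 0; 0; 0]; [:: 0; 0; 1; 0; 0; 1]; [:: 0; 0; 0; 1; 0; 0]; [:: 0; 0; 0; 0; 1; 0]]%N.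
Definition LR1 : seq (seq nat) := [:: [:: 0; 0; 0; 1; 0; 0]; [:: 0; 1; 1; 1; 0; 0]; [:: 1; 0; 0; 0; 1; 1]; [:: 1; 1; 1; 1; 0; 0]; [:: 0; 1; 1; 0; 0; 0]]%N.
Definition LR2 : seq (seq nat) := [:: [:: 0; 0; 0; 1; 0; 0]; [:: 0; 1; 0; 1; 0; 1]; [:: 1; 0; 1; 0; 1; 0]; [:: 1; 1; 1; 1; 0; 0]; [:: 0; 1; 0; 0; 0; 1]]%N.
Definition LD4 : seq (seq nat) := [:: [:: 1; 0; 1; 0; 0; 0]; [:: 0; 1; 0; 0; 0; 0]; [:: 0; 0; 0; 1; 0; 0]; [:: 0; 0; 0; 0; 0; 1]; [:: 0; 0; 0; 0; 1; 0]]%N.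
Definition LE4 : seq (seq nat) := [:: [:: 0; 0; 1; 0; 0]; [:: 0; 1; 1; 1; 0]; [:: 1; 0; 0; 0; 1]; [:: 1; 1; 1; 0; 0]; [:: 0; 1; 0; 1; 0]; [:: 1; 0; 0; 0; 1]]%N.
Definition LB : seq (seq nat) := [:: [:: 1; 0; 1; 0; 1]; [:: 0; 1; 1; 1; 0]; [:: 1; 1; 1; 0; 0]; [:: 1; 0; 0; 0; 1]; [:: 0; 1; 0; 1; 0]]%N.
Definition LC4 : seq (seq nat) := [:: [:: 0; 0; 1; 0]; [:: 1; 1; 1; 1]; [:: 1; 1; 1; 0]; [:: 1; 1; 0; 1]]%N.
Definition LC6 : seq (seq nat) := [:: [:: 0; 0; 0; 1; 0; 0]; [:: 0; 1; 1; 1; 0; 0]; [:: 1; 0; 0; 0; 1; 1]; [:: 1; 1; 1; 1; 0; 0]; [:: 0; 1; 1; 0; 0; 0]; [:: 1; 0; 0; 0; 1; 1]]%N.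
Definition LDbT : seq (seq nat) := [:: [:: 1; 0; 0; 0; 0]; [:: 0; 1; 0; 0; 0]; [:: 0; 0; 1; 0; 0]; [:: 0; 0; 0; 1; 0]; [:: 0; 0; 0; 0; 1]; [:: 0; 0; 1; 0; 0]]%N.
Definition LM : seq (seq nat) := [:: [:: 0; 0; 0; 1; 0]; [:: 0; 1; 1; 1; 0]; [:: 1; 0; 1; 0; 1]; [:: 1; 1; 1; 1; 0]; [:: 0; 1; 1; 0; 0]]%N.
Definition LC6p : seq (seq nat) := [:: [:: 0; 0; 0; 1; 0; 0]; [:: 0; 1; 0; 1; 0; 1]; [:: 1; 0; 1; 0; 1; 0]; [:: 1; 1; 1; 1; 0; 0]; [:: 0; 1; 0; 0; 0; 1]; [:: 1; 0; 1; 0; 1; 0]]%N.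
Definition LR : seq (seq nat) := [:: [:: 4; 4; 4; 2; 2]; [:: 2; 2; 3; 1; 1]; [:: 2; 2; 2; 2; 2]]%N.
Definition LS : seq (seq nat) := [:: [:: 5; 6; 3]; [:: 5; 6; 3]; [:: 6; 7; 3]; [:: 3; 3; 2]; [:: 3; 3; 2]]%N.
Definition LA2 : seq (seq nat) := [:: [:: 4; 4; 2]; [:: 2; 3; 1]; [:: 2; 2; 2]]%N.
Definition LA3 : seq (seq nat) := [:: [:: 10; 12; 6]; [:: 6; 7; 3]; [:: 6; 6; 4]]%N.
Definition LA4 : seq (seq nat) := [:: [:: 28; 32; 16]; [:: 16; 19; 9]; [:: 16; 18; 10]]%N.
Definition LA5 : seq (seq nat) := [:: [:: 76; 88; 44]; [:: 44; 51; 25]; [:: 44; 50; 26]]%N.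
Definition LB2 : seq (seq nat) := [:: [:: 2; 2; 2; 1; 1]; [:: 2; 2; 2; 1; 1]; [:: 2; 2; 3; 1; 1]; [:: 1; 1; 1; 1; 1]; [:: 1; 1; 1; 1; 1]]%N.
Definition LB3 : seq (seq nat) := [:: [:: 5; 5; 6; 3; 3]; [:: 5; 5; 6; 3; 3]; [:: 6; 6; 7; 3; 3]; [:: 3; 3; 3; 2; 2]; [:: 3; 3; 3; 2; 2]]%N.
Definition LB4 : seq (seq nat) := [:: [:: 14; 14; 16; 8; 8]; [:: 14; 14; 16; 8; 8]; [:: 16; 16; 19; 9; 9]; [:: 8; 8; 9; 5; 5]; [:: 8; 8; 9; 5; 5]]%N.
Definition LB5 : seq (seq nat) := [:: [:: 38; 38; 44; 22; 22]; [:: 38; 38; 44; 22; 22]; [:: 44; 44; 51; 25; 25]; [:: 22; 22; 25; 13; 13]; [:: 22; 22; 25; 13; 13]]%N.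
Definition LAR : seq (seq nat) := [:: [:: 10; 10; 12; 6; 6]; [:: 6; 6; 7; 3; 3]; [:: 6; 6; 6; 4; 4]]%N.
Definition LBS : seq (seq nat) := [:: [:: 14; 16; 8]; [:: 14; 16; 8]; [:: 16; 19; 9]; [:: 8; 9; 5]; [:: 8; 9; 5]]%N.
Definition LBT : seq (seq nat) := [:: [:: 1; 0; 1; 1; 0]; [:: 0; 1; 1; 0; 1]; [:: 1; 1; 1; 0; 0]; [:: 0; 1; 0; 0; 1]; [:: 1; 0; 0; 1; 0]]%N.
Definition LBT2 : seq (seq nat) := [:: [:: 2; 2; 2; 1; 1]; [:: 2; 2; 2; 1; 1]; [:: 2; 2; 3; 1; 1]; [:: 1; 1; 1; 1; 1]; [:: 1; 1; 1; 1; 1]]%N.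
Definition LRT : seq (seq nat) := [:: [:: 4; 2; 2]; [:: 4; 2; 2]; [:: 4; 3; 2]; [:: 2; 1; 2]; [:: 2; 1; 2]]%N.
Definition Lv : seq (seq nat) := [:: [:: 8]; [:: 8]; [:: 9]; [:: 5]; [:: 5]]%N.
Definition PD1 : seq nat := [:: 0; 0; 1; 2]%N.
Definition PD2 : seq nat := [:: 0; 1; 1; 2; 3; 3]%N.
Definition PDb : seq nat := [:: 0; 1; 2; 3; 4; 2]%N.
Definition PD4 : seq nat := [:: 0; 1; 0; 2; 4; 3]%N.

Local Open Scope ring_scope.

Lemma matAE : matA = mxs 3 3 LA. Proof. by []. Qed.
Lemma matBE : matB = mxs 5 5 LB. Proof. by []. Qed.

Ltac chk := vm_compute; reflexivity.

Lemma DbTE : (mxs 5 6 LDb)^T = mxs 6 5 LDbT.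
Proof. by apply: trP; chk. Qed.

Definition X3 := existT (fun n => 'M[nat]_n) 3 (mxs 3 3 LA).
Definition X4 := existT (fun n => 'M[nat]_n) 4 (mxs 4 4 LC4).
Definition X6 := existT (fun n => 'M[nat]_n) 6 (mxs 6 6 LC6).
Definition X6p := existT (fun n => 'M[nat]_n) 6 (mxs 6 6 LC6p).
Definition XM := existT (fun n => 'M[nat]_n) 5 (mxs 5 5 LM).
Definition X5 := existT (fun n => 'M[nat]_n) 5 (mxs 5 5 LB).

Lemma st1 : outsplit X3 X4.
Proof.
split; [by apply: nzP; chk|split; [by apply: nzP; chk|]].
exists (mxs 3 4 LD1), (mxs 4 3 LE1); split; first by apply: (@divP _ _ _ PD1); chk.
by split; symmetry; apply: mulP; chk.
Qed.

Lemma st2 : outsplit X4 X6.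
Proof.
split; [by apply: nzP; chk|split; [by apply: nzP; chk|]].
exists (mxs 4 6 LD2), (mxs 6 4 LE2); split; first by apply: (@divP _ _ _ PD2); chk.
by split; symmetry; apply: mulP; chk.
Qed.

Lemma st4 : outsplit X5 X6p.
Proof.
split; [by apply: nzP; chk|split; [by apply: nzP; chk|]].
exists (mxs 5 6 LD4), (mxs 6 5 LE4); split; first by apply: (@divP _ _ _ PD4); chk.
by split; symmetry; apply: mulP; chk.
Qed.

Lemma st3 : balanced_elem_sse X6 X6p.
Proof.
split; [by apply: nzP; chk|split; [by apply: nzP; chk|]].
exists erefl, 5%N, (mxs 5 6 LDb), (mxs 5 6 LR1), (mxs 5 6 LR2).
split; first by apply: (@divP _ _ _ PDb); chk.
rewrite DbTE castmx_id.
have h1 : mxs 5 6 LR1 *m mxs 6 5 LDbT = mxs 5 5 LM by apply: mulP; chk.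
have h2 : mxs 5 6 LR2 *m mxs 6 5 LDbT = mxs 5 5 LM by apply: mulP; chk.
rewrite h1 h2; split; [|split] => //; symmetry; apply: mulP; chk.
Qed.

Lemma bsse_part : bsse X3 X5.
Proof.
apply: (@rst_trans _ _ _ X4); first by apply: rst_step; right; exact: st1.
apply: (@rst_trans _ _ _ X6); first by apply: rst_step; right; exact: st2.
apply: (@rst_trans _ _ _ X6p); first by apply: rst_step; left; exact: st3.
by apply: rst_sym; apply: rst_step; right; exact: st4.
Qed.

Lemma sse_part : sse X3 X5.
Proof.
apply: (@rst_trans _ _ _ X4).
  apply: rst_step; exists (mxs 3 4 LD1), (mxs 4 3 LE1).
  by split; symmetry; apply: mulP; chk.
apply: (@rst_trans _ _ _ X6).
  apply: rst_step; exists (mxs 4 6 LD2), (mxs 6 4 LE2).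
  by split; symmetry; apply: mulP; chk.
apply: (@rst_trans _ _ _ XM).
  apply: rst_step; exists (mxs 6 5 LDbT), (mxs 5 6 LR1).
  by split; symmetry; apply: mulP; chk.
apply: (@rst_trans _ _ _ X6p).
  apply: rst_step; exists (mxs 5 6 LR2), (mxs 6 5 LDbT).
  by split; symmetry; apply: mulP; chk.
apply: rst_sym; apply: rst_step; exists (mxs 5 6 LD4), (mxs 6 5 LE4).
by split; symmetry; apply: mulP; chk.
Qed.

Lemma powA : (mxs 3 3 LA) ^+ 5 = mxs 3 3 LA5.
Proof.
rewrite !exprS expr0 mulr1 -!mulmxE.
have h2 : mxs 3 3 LA *m mxs 3 3 LA = mxs 3 3 LA2 by apply: mulP; chk.
have h3 : mxs 3 3 LA *m mxs 3 3 LA2 = mxs 3 3 LA3 by apply: mulP; chk.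
have h4 : mxs 3 3 LA *m mxs 3 3 LA3 = mxs 3 3 LA4 by apply: mulP; chk.
have h5 : mxs 3 3 LA *m mxs 3 3 LA4 = mxs 3 3 LA5 by apply: mulP; chk.
by rewrite h2 h3 h4 h5.
Qed.

Lemma powB : (mxs 5 5 LB) ^+ 5 = mxs 5 5 LB5.
Proof.
rewrite !exprS expr0 mulr1 -!mulmxE.
have h2 : mxs 5 5 LB *m mxs 5 5 LB = mxs 5 5 LB2 by apply: mulP; chk.
have h3 : mxs 5 5 LB *m mxs 5 5 LB2 = mxs 5 5 LB3 by apply: mulP; chk.
have h4 : mxs 5 5 LB *m mxs 5 5 LB3 = mxs 5 5 LB4 by apply: mulP; chk.
have h5 : mxs 5 5 LB *m mxs 5 5 LB4 = mxs 5 5 LB5 by apply: mulP; chk.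
by rewrite h2 h3 h4 h5.
Qed.

Lemma unital_part : unital_se X3 X5.
Proof.
exists 5%N, (mxs 3 5 LR), (mxs 5 3 LS).
split => //; split; first by rewrite powA; symmetry; apply: mulP; chk.
split; first by rewrite powB; symmetry; apply: mulP; chk.
split.
  have h1 : mxs 3 3 LA *m mxs 3 5 LR = mxs 3 5 LAR by apply: mulP; chk.
  have h2 : mxs 3 5 LR *m mxs 5 5 LB = mxs 3 5 LAR by apply: mulP; chk.
  by rewrite h1 h2.
split.
  have h1 : mxs 5 5 LB *m mxs 5 3 LS = mxs 5 3 LBS by apply: mulP; chk.
  have h2 : mxs 5 3 LS *m mxs 3 3 LA = mxs 5 3 LBS by apply: mulP; chk.
  by rewrite h1 h2.
exists 0%N, 2%N.
have hBT : (mxs 5 5 LB)^T = mxs 5 5 LBT by apply: trP; chk.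
have hRT : (mxs 3 5 LR)^T = mxs 5 3 LRT by apply: trP; chk.
rewrite hBT hRT expr0 mul1mx add0n expr2 -mulmxE !constP.
have h1 : mxs 5 3 LRT *m mxs 3 1 (nseq 3 (nseq 1 1%N)) = mxs 5 1 Lv by apply: mulP; chk.
have h2 : mxs 5 5 LBT *m mxs 5 5 LBT = mxs 5 5 LBT2 by apply: mulP; chk.
have h3 : mxs 5 5 LBT2 *m mxs 5 1 (nseq 5 (nseq 1 1%N)) = mxs 5 1 Lv by apply: mulP; chk.
by rewrite h1 h2 h3.
Qed.

Theorem mainTheorem12 :
  bsse (existT _ 3 matA) (existT _ 5 matB) /\
  sse (existT _ 3 matA) (existT _ 5 matB) /\
  unital_se (existT _ 3 matA) (existT _ 5 matB).
Proof.
rewrite matAE matBE.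
split; [exact: bsse_part|split; [exact: sse_part|exact: unital_part]].
Qed.
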